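(* Let $k$ be odd, $n=4k$, $d=\frac{(3^{2k}+1)^2}{20}$, $\alpha$ a primitive element of $\mathrm{GF}(3^n)$, $s_t=\mathrm{Tr}_1^n(\alpha^t)$, and for $0\le\tau\le 3^n-2$ let $C_d(\tau)=\sum_{t=0}^{3^n-2}\omega^{s_{t+\tau}-s_{dt}}$. Put $a=\alpha^\tau$ and let $r$ be a nonsquare in $\mathrm{GF}(3^4)$ (viewed inside $\mathrm{GF}(3^n)$). Then $$C_d(\tau)=-1+S_d(\tau),\qquad S_d(\tau)=\sum_{x\in\mathrm{GF}(3^n)}\omega^{\mathrm{Tr}_1^n(ax-x^d)},$$ and $$2S_d(\tau)=\sum_{x\in\mathrm{GF}(3^n)}\omega^{q_1(x)}+\sum_{x\in\mathrm{GF}(3^n)}\omega^{q_2(x)},$$ where $$q_1(x)=\mathrm{Tr}_1^n\big(a x^{3^{2(k+1)}+1}-x^{3^{2k}+1}\big),\qquad q_2(x)=\mathrm{Tr}_1^n\big(a r x^{3^{2(k+1)}+1}-r^{d}x^{3^{2k}+1}\big).$$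
   Context: $\omega=e^{2\pi\sqrt{-1}/3}$. $\mathrm{Tr}_1^n(x)=x+x^3+\cdots+x^{3^{n-1}}$ is the absolute trace from $\mathrm{GF}(3^n)$ to $\mathrm{GF}(3)$, and values in $\mathrm{GF}(3)=\mathbb{Z}/3\mathbb{Z}$ are used as exponents of $\omega$. *)

(* Defs.v *)
From HB Require Import structures.
From mathcomp Require Import all_boot all_order all_algebra all_field.
Set Implicit Arguments. Unset Strict Implicit. Unset Printing Implicit Defensive.
Import Order.TTheory GRing.Theory Num.Theory.
Local Open Scope ring_scope.

Definition omega : algC := (-1 + 'i * sqrtC 3%:R) / 2%:R.

Definition tr (F : finFieldType) (n : nat) (x : F) : F :=
  \sum_(i < n) x ^+ (3 ^ i)%N.

(* GF(3) = Z/3Z value of an element of the prime field, as an exponent in {0,1,2} *)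
Definition gf3 (F : finFieldType) (y : F) : nat :=
  if y == 0 then 0%N else if y == 1 then 1%N else 2%N.

Definition omtr (F : finFieldType) (n : nat) (x : F) : algC :=
  omega ^+ gf3 (tr n x).

(* Main.v *)
Require Import Defs.
From HB Require Import structures.
From mathcomp Require Import all_boot all_order all_algebra all_field.
From mathcomp Require Import ring zify.
Import Order.TTheory GRing.Theory Num.Theory.
Local Open Scope ring_scope.
Set Implicit Arguments. Unset Strict Implicit. Unset Printing Implicit Defensive.

Lemma omega3 : omega ^+ 3 = 1.
Proof.
have hq : omega ^+ 2 + omega + 1 = 0.
  rewrite /omega. set i := 'i. set s := sqrtC 3%:R.
  have e : 3%:R + i^+2 * s^+2 = 0 by rewrite sqrCi sqrtCK mulN1r subrr.
  have -> : ((-1 + i * s) / 2%:R) ^+ 2 + (-1 + i * s) / 2%:R + 1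
          = (3%:R + i^+2 * s^+2) / 4%:R.
    by field.
  by rewrite e mul0r.
apply/eqP; rewrite -subr_eq0.
have -> : omega ^+ 3 - 1 = (omega - 1) * (omega ^+ 2 + omega + 1) by ring.
by rewrite hq mulr0.
Qed.

Section F3.
Variable F : finFieldType.
Hypothesis h3 : (3%:R : F) = 0.

Lemma frob3 (x y : F) : (x + y) ^+ 3 = x ^+ 3 + y ^+ 3.
Proof.
have -> : (x + y) ^+ 3 = x ^+ 3 + y ^+ 3 + 3%:R * (x ^+ 2 * y + x * y ^+ 2) by ring.
by rewrite h3 mul0r addr0.
Qed.

Lemma frobn (x y : F) i : (x + y) ^+ (3 ^ i) = x ^+ (3 ^ i) + y ^+ (3 ^ i).
Proof.
elim: i => [|i IH]; first by rewrite !expn0 !expr1.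
by rewrite expnSr !exprM IH frob3.
Qed.

Lemma tr_add n (x y : F) : tr n (x + y) = tr n x + tr n y.
Proof. by rewrite /tr -big_split /=; apply: eq_bigr => i _; rewrite frobn. Qed.

Lemma tr0 n : tr n (0 : F) = 0.
Proof. by rewrite /tr big1 // => i _; rewrite expr0n expn_eq0. Qed.

Lemma tr_cube n (x : F) : (0 < n)%N -> x ^+ (3 ^ n) = x -> tr n x ^+ 3 = tr n x.
Proof.
move=> n0 hx; rewrite /tr.
rewrite (big_morph (fun z : F => z ^+ 3) frob3 (expr0n _ 3)).
case: n n0 hx => // n _ hx.
rewrite big_ord_recr big_ord_recl /= -exprM -expnSr hx expn0 expr1 addrC.
congr (_ + _); apply: eq_bigr => i _; by rewrite -exprM -expnSr.
Qed.

Lemma two_neq0 : (2%:R : F) != 0.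
Proof.
apply/eqP => h2; have e : (3%:R : F) = 2%:R + 1 by rewrite -natr1.
by move: e; rewrite h3 h2 add0r => /esym/eqP; rewrite oner_eq0.
Qed.

Lemma cube_vals (t : F) : t ^+ 3 = t -> [\/ t = 0, t = 1 | t = -1].
Proof.
move=> ht; have : t * (t - 1) * (t + 1) = 0.
  have -> : t * (t - 1) * (t + 1) = t ^+ 3 - t by ring.
  by rewrite ht subrr.
move/eqP; rewrite !mulf_eq0 subr_eq0 addr_eq0 => /orP[/orP[]|] /eqP ->;
  by [apply: Or31 | apply: Or32 | apply: Or33].
Qed.

Lemma gf3_0 : gf3 (0 : F) = 0%N. Proof. by rewrite /gf3 eqxx. Qed.
Lemma gf3_1 : gf3 (1 : F) = 1%N. Proof. by rewrite /gf3 oner_eq0 eqxx. Qed.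
Lemma gf3_m1 : gf3 (-1 : F) = 2%N.
Proof.
rewrite /gf3 oppr_eq0 oner_eq0 /=.
have -> : (-1 == 1 :> F) = false.
  apply/negbTE/eqP => h; move: two_neq0; rewrite (natrD _ 1 1) -{1}h addNr.
  by rewrite eqxx.
by [].
Qed.

Lemma om_add (u v : F) : [\/ u = 0, u = 1 | u = -1] -> [\/ v = 0, v = 1 | v = -1] ->
  omega ^+ gf3 (u + v) = omega ^+ gf3 u * omega ^+ gf3 v.
Proof.
have e11 : (1 + 1 : F) = -1.
  by apply/eqP; rewrite -subr_eq0 opprK -addrA -(natrD _ 1 2) h3.
have em : (-1 + -1 : F) = 1 by rewrite -opprD e11 opprK.
have o3 := omega3.
case=> ->; case=> ->;
rewrite ?add0r ?addr0 ?e11 ?em ?subrr ?addNr ?gf3_0 ?gf3_1 ?gf3_m1 ?expr0 ?mul1r ?mulr1 //.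
all: try by rewrite -exprD.
by rewrite -exprD -[(2+2)%N]/(3+1)%N exprD o3 mul1r.
Qed.

End F3.

Lemma sum_fiber (T : finType) (f : T -> T) (G : T -> algC) :
  \sum_y G (f y) = \sum_x (#|[pred y | f y == x]|)%:R * G x.
Proof.
rewrite (partition_big f predT) //=; apply: eq_bigr => x _.
rewrite (eq_bigr (fun _ => G x)); last by move=> y /eqP ->.
by rewrite sumr_const mulr_natl.
Qed.

Section F3b.
Variable F : finFieldType.
Hypothesis h3 : (3%:R : F) = 0.
Variables (N M : nat) (alpha : F).
Hypothesis hN : #|F| = N.+1.
Hypothesis hNM : N = (M * 2)%N.
Hypothesis hM : (0 < M)%N.
Hypothesis ha : N.-primitive_root alpha.

Lemma powN (z : F) : z != 0 -> z ^+ N = 1.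
Proof.
move=> z0; apply: (mulIf z0); rewrite mul1r -exprSr -hN; exact: expf_card.
Qed.

Lemma pow_mod (z : F) a b : (0 < a)%N -> z ^+ (a + N * b) = z ^+ a.
Proof.
move=> a0; have [->|z0] := eqVneq z 0.
  by rewrite !expr0n !eqn0Ngt a0 /= addn_gt0 a0.
by rewrite exprD exprM powN // expr1n mulr1.
Qed.



Lemma alpha_neq0 : alpha != 0.
Proof.
apply/eqP => a0; have := prim_expr_order ha; rewrite a0 expr0n hNM muln_eq0.
by rewrite eqn0Ngt hM /= => /eqP; rewrite eq_sym oner_eq0.
Qed.

Lemma alpha_img : [set alpha ^+ i | i : 'I_N] = [set~ 0].
Proof.
apply/setP/subset_cardP.
  rewrite card_imset ?card_ord ?cardsC1 ?hN //.
  by move=> i j /eqP; rewrite (eq_prim_root_expr ha) !modn_small // => /eqP/val_inj.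
apply/subsetP => x /imsetP[i _ ->]; by rewrite in_setC1 expf_neq0 // alpha_neq0.
Qed.

Lemma alpha_surj (z : F) : z != 0 -> exists i : 'I_N, z = alpha ^+ i.
Proof.
move=> z0; have : z \in [set~ 0] by rewrite in_setC1.
by rewrite -alpha_img => /imsetP[i _ ->]; exists i.
Qed.

Lemma alphaM : alpha ^+ M = -1.
Proof.
have h1 : (alpha ^+ M) ^+ 2 = 1 by rewrite -exprM -hNM prim_expr_order.
have : (alpha ^+ M - 1) * (alpha ^+ M + 1) = 0.
  have -> : (alpha ^+ M - 1) * (alpha ^+ M + 1) = (alpha ^+ M) ^+ 2 - 1 by ring.
  by rewrite h1 subrr.
move/eqP; rewrite mulf_eq0 subr_eq0 addr_eq0 => /orP[|/eqP //].
rewrite -(prim_order_dvd ha) hNM => /dvdnP[j hj].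
suff : (M * 2 <= M)%N by rewrite leqNgt -[X in (X < _)%N]muln1 ltn_pmul2l.
by rewrite {2}hj; case: j hj => [|j] hj; [move: hM; rewrite hj | rewrite mulnS leq_addr].
Qed.

Lemma sq_or (z : F) : z != 0 -> (exists w, w != 0 /\ z = w ^+ 2) \/ z ^+ M = -1.
Proof.
move=> z0; have [i ->] := @alpha_surj z z0.
rewrite -(odd_double_half i); case: (odd i) => /=.
  right; rewrite -exprM.
  have -> : ((1 + i./2.*2) * M = M + N * i./2)%N by move: (i./2) => h; rewrite -muln2 hNM; lia.
  by rewrite pow_mod // alphaM.
left; exists (alpha ^+ i./2); split.
  by rewrite expf_neq0 // alpha_neq0.
by rewrite add0n -exprM -muln2.
Qed.

Lemma sq_pow (w : F) : w != 0 -> (w ^+ 2) ^+ M = 1.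
Proof. by move=> w0; rewrite -exprM mulnC -hNM powN. Qed.

End F3b.

Section F3c.
Variable F : finFieldType.
Hypothesis h3 : (3%:R : F) = 0.
Variables (N M : nat) (alpha r : F).
Hypothesis hN : #|F| = N.+1.
Hypothesis hNM : N = (M * 2)%N.
Hypothesis hM : (0 < M)%N.
Hypothesis ha : N.-primitive_root alpha.
Hypothesis r0 : r != 0.
Hypothesis rns : ~ exists y, r = y ^+ 2.

Lemma m1_neq1 : (-1 : F) != 1.
Proof.
apply/eqP => h; move: (two_neq0 h3); rewrite (natrD _ 1 1) -{1}h addNr.
by rewrite eqxx.
Qed.

Lemma cnt_sq (w : F) : w != 0 -> #|[pred y : F | y ^+ 2 == w ^+ 2]| = 2%N.
Proof.
move=> w0; rewrite (eq_card (B := pred2 w (-w))) => [|y]; last by rewrite !inE eqf_sqr.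
rewrite card2; suff -> : w != - w by [].
apply/eqP => h; have : 2%:R * w = 0 by rewrite mulr_natl mulr2n {2}h subrr.
by move/eqP; rewrite mulf_eq0 (negbTE (two_neq0 h3)) (negbTE w0).
Qed.

Lemma cnt_zero : #|[pred y : F | y ^+ 2 == 0]| = 1%N.
Proof.
by rewrite (eq_card (B := pred1 0)) ?card1 // => y; rewrite !inE sqrf_eq0.
Qed.

Lemma cnt_none (x : F) : (forall w, x != w ^+ 2) -> #|[pred y : F | y ^+ 2 == x]| = 0%N.
Proof. by move=> h; apply: eq_card0 => y; rewrite !inE eq_sym (negbTE (h y)). Qed.

Lemma count2 (x : F) :
  addn #|[pred y : F | y ^+ 2 == x]| #|[pred y : F | r * y ^+ 2 == x]| = 2%N.
Proof.
have ri : r^-1 != 0 by rewrite invr_eq0.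
rewrite (eq_card (A := [pred y : F | (r * y ^+ 2 == x)%R]) (B := [pred y : F | (y ^+ 2 == r^-1 * x)%R])); last first.
  move=> y /=; apply/eqP/eqP => [<-|->]; first by rewrite mulKf.
  by rewrite mulrA divff // mul1r.
have [->|x0] := eqVneq x 0; first by rewrite mulr0 cnt_zero.
have rx0 : r^-1 * x != 0 by rewrite mulf_neq0.
have [[w [w0 hx]]|xM] := sq_or hN hNM hM ha x0.
  subst x.
  rewrite cnt_sq // cnt_none // => v; apply/eqP => hv; apply: rns.
  have v0 : v != 0 by apply/eqP => v0; move: rx0; rewrite hv v0 expr0n eqxx.
  exists (w / v); rewrite expr_div_n -hv; field.
  by rewrite w0 r0.
have [[v [v0 hv]]|rxM] := sq_or hN hNM hM ha rx0.
  rewrite hv cnt_sq // cnt_none // => w; apply/eqP => hw.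
  have w0 : w != 0 by apply/eqP => w0; move: x0; rewrite hw w0 expr0n eqxx.
  by move: xM; rewrite hw (sq_pow hN hNM) // => /eqP; rewrite eq_sym (negbTE m1_neq1).
exfalso; have [[u [u0 hu]]|rM] := sq_or hN hNM hM ha r0; first by apply: rns; exists u.
move: rxM; rewrite exprMn xM exprVn rM invrN1 mulN1r opprK => /eqP.
by rewrite eq_sym (negbTE m1_neq1).
Qed.

Lemma sum_sq (G : F -> algC) :
  \sum_y G (y ^+ 2) + \sum_y G (r * y ^+ 2) = 2%:R * \sum_x G x.
Proof.
rewrite (sum_fiber (fun y : F => y ^+ 2)) (sum_fiber (fun y : F => r * y ^+ 2)).
rewrite -big_split mulr_sumr; apply: eq_bigr => x _ /=.
by rewrite -mulrDl -natrD count2.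
Qed.

End F3c.

Section F4.
Variable F : finFieldType.
Hypothesis h3 : (3%:R : F) = 0.
Variable n : nat.
Hypothesis hn : (0 < n)%N.
Hypothesis hF : forall x : F, x ^+ (3 ^ n) = x.

Lemma tr_vals (x : F) : [\/ tr n x = 0, tr n x = 1 | tr n x = -1].
Proof. exact: cube_vals (tr_cube h3 hn (hF x)). Qed.

Lemma omtr_add (x y : F) : omtr n (x + y) = omtr n x * omtr n y.
Proof. by rewrite /omtr tr_add //; apply: om_add => //; apply: tr_vals. Qed.

Lemma omtr0 : omtr n (0 : F) = 1.
Proof. by rewrite /omtr tr0 gf3_0 expr0. Qed.

Lemma omega_neq0 : omega != 0.
Proof.
apply/eqP => h; have := omega3; rewrite h expr0n /= => /eqP; by rewrite eq_sym oner_eq0.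
Qed.

Lemma omtr_neq0 (x : F) : omtr n x != 0.
Proof. by rewrite /omtr expf_neq0 // omega_neq0. Qed.

Lemma omtr_sub (x y : F) : omtr n x / omtr n y = omtr n (x - y).
Proof.
have -> : omtr n x = omtr n (x - y) * omtr n y by rewrite -omtr_add subrK.
by rewrite mulfK // omtr_neq0.
Qed.

End F4.

Lemma nonsq_r (F : finFieldType) (r : F) k : (3%:R : F) = 0 -> odd k ->
  (forall x : F, x ^+ (81 ^ k) = x) -> r ^+ 81 = r ->
  ~ (exists y : F, y ^+ 81 = y /\ y ^+ 2 = r) ->
  r != 0 /\ ~ exists y, r = y ^+ 2.
Proof.
move=> h3 ok hF hr hns; have r0 : r != 0.
  by apply/eqP => r0; apply: hns; exists 0; rewrite r0 !expr0n.
split=> // -[y hy]; have : (y ^+ 81) ^+ 2 == y ^+ 2.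
  by rewrite -exprM mulnC exprM -hy hr.
rewrite eqf_sqr => /orP[/eqP h|/eqP h]; first by apply: hns; exists y.
have hj : forall j, y ^+ (81 ^ j) = if odd j then - y else y.
  elim=> [|j IH]; first by rewrite expn0 expr1.
  rewrite expnSr exprM IH oddS; case: (odd j); last exact: h.
  by rewrite /= exprNn -signr_odd /= expr1 h mulN1r opprK.
have := hj k; rewrite ok hF => /eqP; rewrite -subr_eq0 opprK -mulr2n -mulr_natl.
rewrite mulf_eq0 => /orP[] /eqP h0.
  by move: (two_neq0 h3); rewrite h0 eqxx.
by move: r0; rewrite hy h0 expr0n eqxx.
Qed.

Lemma q_mod j : (3 ^ (2 * (2 * j + 1)) %% 20 = 9)%N.
Proof.
elim: j => [//|j IH].
have -> : (2 * (2 * j.+1 + 1) = 2 * (2 * j + 1) + 4)%N by lia.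
by rewrite expnD -modnMml IH.
Qed.

Lemma q_form k : odd k -> exists c, (3 ^ (2 * k) = 20 * c + 9)%N.
Proof.
move=> ok; exists (3 ^ (2 * k) %/ 20)%N.
have hk : k = (2 * k./2 + 1)%N by rewrite -{1}(odd_double_half k) ok mul2n addnC.
have hm : (3 ^ (2 * k) %% 20 = 9)%N by rewrite hk q_mod.
by rewrite {1}(divn_eq (3 ^ (2 * k)) 20) hm mulnC.
Qed.

Lemma coprime_e c : coprime (90 * c + 41) ((20 * c + 8) * (20 * c + 10)).
Proof.
set e := (90 * c + 41)%N; set N := ((20 * c + 8) * (20 * c + 10))%N.
have he : (e * (2 * (180 * c + 80)) = 81 * N + 80)%N by rewrite /e /N; ring.
have g80 : (gcdn e N %| 80)%N.
  rewrite -(dvdn_addr _ (dvdn_mull 81 (dvdn_gcdr e N))) -he.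
  exact: dvdn_mulr (dvdn_gcdl e N).
have c80 : coprime e 80.
  rewrite -[80%N]/(2 ^ 4 * 5)%N coprimeMr; apply/andP; split.
    by apply: coprimeXr; rewrite coprimen2 /e oddD oddM.
  have -> : e = ((18 * c + 8) * 5 + 1)%N by rewrite /e; ring.
  by rewrite /coprime -gcdn_modl modnMDl.
rewrite /coprime -dvdn1; move: c80; rewrite /coprime => /eqP <-.
by rewrite dvdn_gcd dvdn_gcdl g80.
Qed.

Unset Implicit Arguments.

Theorem lemma1 (k : nat) (F : finFieldType) (alpha r : F) (tau : nat) :
  odd k ->
  #|F| = (3 ^ (4 * k))%N ->
  (3 ^ (4 * k) - 1).-primitive_root alpha ->
  (tau <= 3 ^ (4 * k) - 2)%N ->
  r ^+ (3 ^ 4) = r ->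
  ~ (exists y : F, y ^+ (3 ^ 4) = y /\ y ^+ 2 = r) ->
  let n := (4 * k)%N in
  let d := ((3 ^ (2 * k) + 1) ^ 2 %/ 20)%N in
  let s := fun t : nat => gf3 (tr n (alpha ^+ t)) in
  let a := alpha ^+ tau in
  let Cd := \sum_(0 <= t < 3 ^ n - 1) omega ^+ s (t + tau)%N / omega ^+ s (d * t)%N in
  let Sd := \sum_(x : F) omtr n (a * x - x ^+ d) in
  let q1 := fun x : F =>
    a * x ^+ (3 ^ (2 * (k + 1)) + 1) - x ^+ (3 ^ (2 * k) + 1) in
  let q2 := fun x : F =>
    a * r * x ^+ (3 ^ (2 * (k + 1)) + 1) - r ^+ d * x ^+ (3 ^ (2 * k) + 1) in
  Cd = -1 + Sd /\
  2%:R * Sd = \sum_(x : F) omtr n (q1 x) + \sum_(x : F) omtr n (q2 x).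
Proof.
move=> ok hF hp htau hr hns n d s a Cd Sd q1 q2.
have h3 : (3%:R : F) = 0 by apply: pcharf0; apply: (card_finPcharP hF).
have k0 : (0 < k)%N by case: k ok {hF hp htau n d s Cd Sd q1 q2}.
have n0 : (0 < n)%N by rewrite /n muln_gt0.
have hFn : forall x : F, x ^+ (3 ^ n) = x by move=> x; rewrite /n -hF expf_card.
have [c hc] := q_form ok.
set N := (3 ^ (4 * k) - 1)%N.
have hNc : N = ((20 * c + 8) * (20 * c + 10))%N.
  rewrite /N (_ : 4 * k = 2 * k + 2 * k)%N; last by lia.
  rewrite expnD hc.
  have -> : ((20 * c + 9) * (20 * c + 9) = (20 * c + 8) * (20 * c + 10) + 1)%N by ring.
  by rewrite addnK.
have hN : #|F| = N.+1 by rewrite hF /N subn1 prednK // expn_gt0.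
set M := ((10 * c + 4) * (20 * c + 10))%N.
have hNM : N = (M * 2)%N by rewrite hNc /M; ring.
have hM : (0 < M)%N by rewrite /M muln_gt0 !addn_gt0 !orbT.
have [r0 rns] : r != 0 /\ ~ exists y, r = y ^+ 2.
  apply: (nonsq_r h3 ok) => // x.
  have -> : (81 ^ k = 3 ^ (4 * k))%N by rewrite expnM.
  by rewrite -hF expf_card.
have hd : d = (5 * (2 * c + 1) ^ 2)%N.
  rewrite /d hc (_ : 20 * c + 9 + 1 = 10 * (2 * c + 1))%N; last by lia.
  by rewrite expnMn (_ : 10 ^ 2 = 20 * 5)%N // -mulnA mulKn.
set G := fun x : F => omtr n (a * x - x ^+ d).
have d0 : (0 < d)%N by rewrite hd muln_gt0 expn_gt0 addn_gt0 orbT.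
have G0 : G 0 = 1 by rewrite /G mulr0 expr0n eqn0Ngt d0 /= mulr0n subrr omtr0.
have eS : Sd = \sum_x G x by [].
split.
  have e1 : Cd = \sum_(t < N) G (alpha ^+ t).
    rewrite /Cd big_mkord; apply: eq_bigr => t _.
    rewrite /s /G exprD (mulrC (alpha ^+ t)) (mulnC d) exprM.
    change (omtr n (a * alpha ^+ t) / omtr n ((alpha ^+ t) ^+ d) = omtr n (a * alpha ^+ t - (alpha ^+ t) ^+ d)).
    by rewrite (omtr_sub h3 n0 hFn).
  have e2 : \sum_(t < N) G (alpha ^+ t) = \sum_(x in [set~ 0]) G x.
    rewrite -(alpha_img hN hNM hM hp) big_imset //=.
    by move=> i j _ _ /eqP; rewrite (eq_prim_root_expr hp) !modn_small // => /eqP/val_inj.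
  have e3 : Sd = 1 + \sum_(x in [set~ 0]) G x.
    rewrite eS (bigD1 0) //= G0; congr (_ + _); apply: eq_bigl => x; by rewrite in_setC1.
  clearbody Cd Sd; by rewrite e1 e2 e3 addKr.
set e := (90 * c + 41)%N.
have hcop := coprime_e c; rewrite -hNc in hcop.
have e0 : (0 < e)%N by rewrite /e addn_gt0 orbT.
have [km kn hkm _] := egcdnP N e0.
rewrite (eqP hcop) in hkm.
have inv : forall z : F, (z ^+ e) ^+ km = z.
  by move=> z; rewrite -exprM mulnC hkm addnC (mulnC kn N) (pow_mod hN z kn (isT : (0 < 1)%N)) expr1.
have hinj : injective (fun z : F => z ^+ e) by move=> x y /= h; rewrite -(inv x) -(inv y) h.
have hm : (3 ^ (2 * (k + 1)) + 1 = e * 2)%N.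
  by rewrite mulnDr expnD hc /e (_ : 3 ^ (2 * 1) = 9)%N //; lia.
have hmd : (e * 2 * d = (3 ^ (2 * k) + 1) + N * (9 * c + 5))%N by rewrite hd hNc hc /e; ring.
have q0 : (0 < 3 ^ (2 * k) + 1)%N by rewrite addn_gt0 orbT.
rewrite /q1 /q2; clearbody Sd; rewrite eS -(sum_sq h3 hN hNM hM hp r0 rns G).
congr (_ + _).
  rewrite (reindex_inj hinj) /=; apply: eq_bigr => z _.
  by rewrite /G -!exprM hmd (pow_mod hN) // -hm.
rewrite (reindex_inj hinj) /=; apply: eq_bigr => z _.
by rewrite /G exprMn -!exprM hmd (pow_mod hN) // -hm mulrA.
Qed.
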